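(* Let $A\in\mathbb{Z}^{d\times n}$ be totally unimodular, $\mathbf{b}\in\mathbb{Z}^d$, $\mathbf{c}\in\mathbb{Z}^n$, $\mathbf{u}\in\mathbb{Z}_{\ge0}^n$, and consider the ILP $\min\{\mathbf{c}^\top\mathbf{x} : A\mathbf{x}=\mathbf{b},\ \mathbf{0}\le\mathbf{x}\le\mathbf{u},\ \mathbf{x}\in\mathbb{Z}^n\}$. Let $m$ be the number of distinct positive values of $-\mathbf{c}^\top\mathbf{z}/\|\mathbf{z}\|_1$ as $\mathbf{z}$ ranges over $\mathcal{C}(A)$. Then from any feasible solution, every sequence of discrete steepest-descent augmentations (with respect to $\mathcal{G}(A)$) reaches an optimal solution after at most $n\cdot m$ augmentations.
   Context: The circuits $\mathcal{C}(A)$: for each nonzero $\mathbf{z}\in\ker(A)$ with inclusion-minimal support among nonzero vectors of $\ker(A)$, the line $\mathbb{R}\mathbf{z}$ contains exactly two nonzero integer points closest to the origin; $\mathcal{C}(A)$ is the set of all these vectors. For $\mathbf{v},\mathbf{w}\in\mathbb{R}^n$ write $\mathbf{v}\sqsubseteq\mathbf{w}$ if $v_iw_i\ge0$ and $|v_i|\le|w_i|$ for all $i$; the Graver basis $\mathcal{G}(A)$ is the set of $\sqsubseteq$-minimal elements of $(\ker(A)\cap\mathbb{Z}^n)\setminus\{\mathbf{0}\}$. Discrete steepest-descent augmentation (ILP): given a feasible $\mathbf{x}_k$, choose $\mathbf{z}\in\mathcal{G}(A)$ maximizing $-\mathbf{c}^\top\mathbf{z}/\|\mathbf{z}\|_1$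 among all $\mathbf{z}\in\mathcal{G}(A)$ with $\mathbf{x}_k+\mathbf{z}$ feasible; if this maximum is positive, let $\alpha$ be the largest integer with $\mathbf{x}_k+\alpha\mathbf{z}$ feasible and set $\mathbf{x}_{k+1}:=\mathbf{x}_k+\alpha\mathbf{z}$, otherwise stop. *)

(* Defs.v *)
From HB Require Import structures.
From mathcomp Require Import all_boot all_order all_algebra.
Set Implicit Arguments. Unset Strict Implicit. Unset Printing Implicit Defensive.
Import Order.TTheory GRing.Theory Num.Theory.
Local Open Scope ring_scope.

Definition totally_unimodular (d n : nat) (A : 'M[int]_(d, n)) : Prop :=
  forall (k : nat) (f : 'I_k -> 'I_d) (g : 'I_k -> 'I_n),
    injective f -> injective g ->
    \det (mxsub f g A) \in [:: -1; 0; 1].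

Definition sd_in_ker (d n : nat) (A : 'M[int]_(d, n)) (z : 'cV[int]_n) : Prop :=
  A *m z = 0.

Definition sd_supp_sub (n : nat) (w z : 'cV[int]_n) : Prop :=
  forall i, w i 0 != 0 -> z i 0 != 0.

Definition sd_parallel (n : nat) (w z : 'cV[int]_n) : Prop :=
  forall i j, w i 0 * z j 0 = w j 0 * z i 0.

Definition sd_sqnorm (n : nat) (z : 'cV[int]_n) : int := \sum_i (z i 0) ^+ 2.

(* Circuits C(A): nonzero kernel vectors of inclusion-minimal support, which
   are integer points closest to the origin on their line. *)
Definition sd_circuit (d n : nat) (A : 'M[int]_(d, n)) (z : 'cV[int]_n) : Prop :=
  [/\ sd_in_ker A z, z != 0,
      (forall w : 'cV[int]_n, sd_in_ker A w -> w != 0 -> sd_supp_sub w z ->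
         sd_supp_sub z w) &
      (forall y : 'cV[int]_n, y != 0 -> sd_parallel y z -> sd_sqnorm z <= sd_sqnorm y)].

Definition sd_conf (n : nat) (v w : 'cV[int]_n) : Prop :=
  forall i, 0 <= v i 0 * w i 0 /\ `|v i 0| <= `|w i 0|.

Definition sd_graver (d n : nat) (A : 'M[int]_(d, n)) (z : 'cV[int]_n) : Prop :=
  [/\ sd_in_ker A z, z != 0 &
      forall w : 'cV[int]_n, sd_in_ker A w -> w != 0 -> sd_conf w z -> w = z].

Definition sd_norm1 (n : nat) (z : 'cV[int]_n) : int := \sum_i `|z i 0|.

Definition sd_cost (n : nat) (c z : 'cV[int]_n) : int := \sum_i c i 0 * z i 0.

Definition sd_ratio (n : nat) (c z : 'cV[int]_n) : rat :=
  ((- sd_cost c z)%:~R) / ((sd_norm1 z)%:~R).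

Definition sd_feasible (d n : nat) (A : 'M[int]_(d, n)) (b : 'cV[int]_d)
  (u x : 'cV[int]_n) : Prop :=
  A *m x = b /\ forall i, 0 <= x i 0 <= u i 0.

Definition sd_optimal (d n : nat) (A : 'M[int]_(d, n)) (b : 'cV[int]_d)
  (c u x : 'cV[int]_n) : Prop :=
  sd_feasible A b u x /\ forall y, sd_feasible A b u y -> sd_cost c x <= sd_cost c y.

Definition sd_step (d n : nat) (A : 'M[int]_(d, n)) (b : 'cV[int]_d)
  (c u x y : 'cV[int]_n) : Prop :=
  exists z : 'cV[int]_n,
    [/\ sd_graver A z, sd_feasible A b u (x + z),
        (forall z', sd_graver A z' -> sd_feasible A b u (x + z') ->
           sd_ratio c z' <= sd_ratio c z),
        0 < sd_ratio c z &
        exists alpha : int,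
          [/\ sd_feasible A b u (x + alpha *: z),
              (forall beta : int, sd_feasible A b u (x + beta *: z) -> beta <= alpha) &
              y = x + alpha *: z]].

Definition sd_stopped (d n : nat) (A : 'M[int]_(d, n)) (b : 'cV[int]_d)
  (c u x : 'cV[int]_n) : Prop :=
  ~ exists z : 'cV[int]_n,
      [/\ sd_graver A z, sd_feasible A b u (x + z) & 0 < sd_ratio c z].

(* Main.v *)
Require Import Defs.
From HB Require Import structures.
From mathcomp Require Import all_boot all_order all_algebra.
From mathcomp Require Import zify ring lra.
From Stdlib Require Import Classical IndefiniteDescription.
Import Order.TTheory GRing.Theory Num.Theory.
Local Open Scope ring_scope.
Set Implicit Arguments. Unset Strict Implicit. Unset Printing Implicit Defensive.



Lemma sum_inj_delta0 k n (g : 'I_k -> 'I_n) (a : 'I_k -> int) (i : 'I_n) :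
  (forall t, g t != i) -> \sum_t a t * (i == g t)%:R = 0.
Proof.
move=> H; apply: big1 => t _; rewrite eq_sym (negbTE (H t)) mulr0 //.
Qed.

Lemma sum_inj_delta1 k n (g : 'I_k -> 'I_n) (a : 'I_k -> int) (t0 : 'I_k) :
  injective g -> \sum_t a t * (g t0 == g t)%:R = a t0.
Proof.
move=> Hg; rewrite (bigD1 t0) //= eqxx mulr1 big1 ?addr0 // => t /negbTE Ht.
rewrite (inj_eq Hg) eq_sym Ht mulr0 //.
Qed.

Lemma tu_det_bound k d n (A : 'M[int]_(d, n)) (f : 'I_k -> 'I_d) (g : 'I_k -> 'I_n) :
  totally_unimodular A -> injective f -> injective g -> `|\det (mxsub f g A)| <= 1.
Proof. move=> TU Hf Hg; have := TU k f g Hf Hg; rewrite !inE; lia. Qed.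

Lemma abs_mul_le1 (x y : int) : x * x = 1 -> `|y| <= 1 -> `|x * y| <= 1.
Proof. nia. Qed.

Lemma sq1_of (x : int) : x != 0 -> `|x| <= 1 -> x * x = 1.
Proof. nia. Qed.

Lemma schur_int k (M : 'M[int]_k) (b : 'M_(k,1)) (c : 'M_(1,k)) (a : 'M_1) :
  \det M * \det M = 1 ->
  \det (block_mx M b c a) = \det M * (a 0 0 - (c *m (\det M *: (\adj M *m b))) 0 0).
Proof.
move=> H; set dM := \det M.
have -> : block_mx M b c a = block_mx 1%:M 0 (dM *: (c *m \adj M)) 1%:M *m
   block_mx M b 0 (a - c *m (dM *: (\adj M *m b))).
  rewrite mulmx_block !mul1mx !mul0mx ?mulmx0 !addr0 ?add0r.
  congr block_mx.
    by rewrite -scalemxAl -mulmxA mul_adj_mx mul_mx_scalar scalerA H scale1r.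
  by rewrite -scalemxAl -mulmxA scalemxAr addrC subrK.
rewrite det_mulmx det_lblock det_ublock !det1 mul1r det_mx11 !mxE.
by rewrite mul1r.
Qed.

Lemma cramer_int k d n (A : 'M[int]_(d,n)) (f : 'I_k -> 'I_d) (g : 'I_k -> 'I_n)
  (j0 : 'I_n) (t : 'I_k) :
  (\adj (mxsub f g A) *m (\col_s A (f s) j0)) t 0 =
  \det (mxsub f (fun s => if s == t then j0 else g s) A).
Proof.
rewrite (expand_det_col _ t) mxE; apply: eq_bigr => s _.
rewrite !mxE eqxx mulrC; congr (_ * _).
rewrite /cofactor; congr (_ * \det _); apply/matrixP => i j.
by rewrite !mxE eq_sym (negbTE (neq_lift _ _)).
Qed.

Lemma tu_circuit d n (A : 'M[int]_(d,n)) (z : 'cV[int]_n) :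
  totally_unimodular A -> A *m z = 0 -> z != 0 ->
  (forall w : 'cV[int]_n, A *m w = 0 -> w != 0 -> sd_supp_sub w z -> sd_supp_sub z w) ->
  exists w : 'cV[int]_n, [/\ A *m w = 0, (forall i, `|w i 0| <= 1), sd_supp_sub w z &
     exists j0, w j0 0 = 1 /\ z = z j0 0 *: w].
Proof.
move=> TU Az nz Hmin.
pose P k := exists (f : 'I_k -> 'I_d) (g : 'I_k -> 'I_n),
  [/\ injective f, injective g, forall t, z (g t) 0 != 0 & \det (mxsub f g A) != 0].
have P0 : P 0%N.
  exists (fun t : 'I_0 => False_rect _ (Bool.diff_false_true (ltn_ord t))).
  exists (fun t : 'I_0 => False_rect _ (Bool.diff_false_true (ltn_ord t))).
  split; [by move=> x; have := ltn_ord x; rewrite ltn0 | by move=> x; have := ltn_ord x; rewrite ltn0 | by move=> x; have := ltn_ord x; rewrite ltn0 | by rewrite det_mx00 oner_neq0].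
have Pb : forall k, P k -> (k <= n)%N.
  by move=> k [f [g [_ Hg _ _]]]; have := leq_card g Hg; rewrite !card_ord.
have [k [Pk nPk]] : exists k, P k /\ ~ P (k + 1)%N.
  apply: NNPP => H.
  have : forall m, P m.
    elim => // m IH; apply: NNPP => Hm; apply: H; exists m; by rewrite addn1.
  by move=> /(_ n.+1)/Pb; rewrite ltnn.
case: Pk => f [g [Hf Hg Hsupp HdM]].
set M := mxsub f g A in HdM *; set dM := \det M in HdM *.
have dM2 : dM * dM = 1.
  exact: sq1_of HdM (tu_det_bound TU Hf Hg).
have [j0 [Hj0 Hgj0]] : exists j0, z j0 0 != 0 /\ forall t, g t != j0.
  apply: NNPP => H.
  have Him : forall j, z j 0 != 0 -> exists t, g t = j.
    move=> j Hj; apply: NNPP => H2; apply: H; exists j; split => // t.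
    by apply/eqP => E; apply: H2; exists t.
  have zE : z = \sum_t z (g t) 0 *: delta_mx (g t) 0.
    apply/matrixP => i j; rewrite (ord1 j) summxE.
    under eq_bigr do rewrite !mxE eqxx andbT.
    case: (boolP [exists t, g t == i]) => [/existsP [t0 /eqP <-]|/existsPn Hn].
      by rewrite sum_inj_delta1.
    rewrite sum_inj_delta0; last by move=> t; apply: Hn.
    apply/eqP; apply: contraT => Hi; have [t Et] := Him i Hi.
    by move: (Hn t); rewrite Et eqxx.
  pose zt : 'cV_k := \col_t z (g t) 0.
  have Mzt : M *m zt = 0.
    apply/matrixP => s j; rewrite (ord1 j) [RHS]mxE.
    have := congr1 (fun X : 'M[int]_(d,1) => X (f s) 0) Az.
    rewrite {1}zE mulmx_sumr summxE [RHS]mxE => <-.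
    rewrite mxE; apply: eq_bigr => t _.
    by rewrite -scalemxAr -colE !mxE mulrC.
  have zt0 : zt = 0.
    have := congr1 (mulmx (\adj M)) Mzt.
    rewrite mulmxA mul_adj_mx mul_scalar_mx mulmx0 => /eqP.
    by rewrite scalemx_eq0 (negbTE HdM) /= => /eqP.
  move/eqP: nz; apply; rewrite zE big1 // => t _.
  have := congr1 (fun X : 'cV[int]_k => X t 0) zt0; rewrite !mxE => ->; by rewrite scale0r.
pose b : 'cV_k := \col_s A (f s) j0.
pose Y : 'cV_k := dM *: (\adj M *m b).
pose w : 'cV[int]_n := delta_mx j0 0 - \sum_t Y t 0 *: delta_mx (g t) 0.
have wE : forall i, w i 0 = (i == j0)%:R - \sum_t Y t 0 * (i == g t)%:R.
  move=> i; rewrite /w !mxE summxE eqxx andbT; congr (_ - _).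
  by apply: eq_bigr => t _; rewrite !mxE eqxx andbT.
have Hgt : forall t, injective (fun s => if s == t then j0 else g s).
  move=> t s1 s2; case: (s1 =P t) => [->|n1]; case: (s2 =P t) => [->|n2] //.
  - by move=> E; move: (Hgj0 s2); rewrite E eqxx.
  - by move=> E; move: (Hgj0 s1); rewrite E eqxx.
  - exact: Hg.
have Yb : forall t, `|Y t 0| <= 1.
  move=> t; rewrite /Y mxE cramer_int.
  exact: abs_mul_le1 dM2 (tu_det_bound TU Hf (Hgt t)).
have Aw : A *m w = 0.
  apply/matrixP => r j; rewrite (ord1 j) [RHS]mxE.
  have -> : (A *m w) r 0 = A r j0 - \sum_t Y t 0 * A r (g t).
    rewrite /w mulmxBr mulmx_sumr -colE !mxE summxE; congr (_ - _).
    by apply: eq_bigr => t _; rewrite -scalemxAr -colE !mxE.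
  pose c : 'rV_k := \row_t A r (g t).
  pose a : 'M_1 := \matrix_(i, j) A r j0.
  pose f' : 'I_(k + 1) -> 'I_d := fun i => match split i with inl s => f s | inr _ => r end.
  pose g' : 'I_(k + 1) -> 'I_n := fun i => match split i with inl s => g s | inr _ => j0 end.
  have NE : mxsub f' g' A = block_mx M b c a.
    apply/matrixP => ii jj; rewrite mxE /f' /g'.
    rewrite -[ii]splitK -[jj]splitK.
    case: (split ii) => i'; case: (split jj) => j'; rewrite !unsplitK /=.
    - by rewrite block_mxEul mxE.
    - by rewrite block_mxEur mxE.
    - by rewrite block_mxEdl mxE.
    - by rewrite block_mxEdr mxE.
  have detN : \det (mxsub f' g' A) = 0.
    case: (boolP (injectiveb f')) => [/injectiveP Hf'|/injectivePn [x [y Hxy Exy]]].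
    - have Hg' : injective g'.
        move=> x y; rewrite /g' -[x]splitK -[y]splitK.
        case: (split x) => x'; case: (split y) => y'; rewrite !unsplitK /=.
        + by move/Hg ->.
        + by move=> E; move: (Hgj0 x'); rewrite E eqxx.
        + by move=> E; move: (Hgj0 y'); rewrite E eqxx.
        + by rewrite (ord1 x') (ord1 y').
      apply/eqP; apply: contraT => H; exfalso; apply: nPk; exists f', g'; split => // t.
      by rewrite /g'; case: splitP => t' _.
    - by apply: (determinant_alternate Hxy) => jj; rewrite !mxE Exy.
  have := schur_int b c a dM2; rewrite -/dM -/Y -NE detN => /esym/eqP.
  rewrite mulf_eq0 (negbTE HdM) /= subr_eq0 => /eqP Ea.
  have E1 : (c *m Y) 0 0 = \sum_t Y t 0 * A r (g t).
    by rewrite mxE; apply: eq_bigr => t _; rewrite mxE mulrC.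
  by rewrite -E1 -Ea mxE subrr.
have wb : forall i, `|w i 0| <= 1.
  move=> i; rewrite wE.
  case: (boolP [exists t, g t == i]) => [/existsP [t0 /eqP <-]|/existsPn Hn].
    by rewrite sum_inj_delta1 // (negbTE (Hgj0 t0)) sub0r normrN.
  rewrite sum_inj_delta0 ?subr0; last by move=> t; apply: Hn.
  by case: (i == j0); rewrite ?normr1 ?normr0.
have wj0 : w j0 0 = 1.
  by rewrite wE eqxx sum_inj_delta0 ?subr0 // => t; apply: Hgj0.
have wsupp : sd_supp_sub w z.
  move=> i; rewrite wE.
  case: (boolP [exists t, g t == i]) => [/existsP [t0 /eqP <-] _|/existsPn Hn].
    exact: Hsupp.
  rewrite sum_inj_delta0 ?subr0; last by move=> t; apply: Hn.
  by case: (boolP (i == j0)) => [/eqP -> //|_]; rewrite eqxx.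
clearbody w.
exists w; split => //; exists j0; split => //.
pose y := z j0 0 *: w - z.
have Ay : A *m y = 0 by rewrite /y mulmxBr -scalemxAr Aw Az scaler0 subrr.
apply/eqP; rewrite eq_sym -subr_eq0; apply/eqP.
apply: NNPP => Hy.
have := Hmin y Ay (introN eqP Hy).
have : sd_supp_sub y z.
  move=> i H; apply/negP => /eqP zi0; move: H.
  rewrite /y !mxE zi0 subr0 mulf_eq0 negb_or => /andP [_ Hw].
  by move: (wsupp i Hw); rewrite zi0 eqxx.
move=> Hyz /(_ Hyz j0 Hj0).
by rewrite /y !mxE wj0 mulr1 subrr eqxx.
Qed.

Lemma l1 (wi gi t : int) : `|wi| <= 1 -> 0 < t -> (0 < wi*gi -> t <= `|gi|) ->
  (wi != 0 -> gi != 0) -> 0 <= (gi - t*wi)*gi.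
Proof. move=> H; have: wi = -1 \/ wi = 0 \/ wi = 1 by lia. case=> [->|[->|->]]; nia. Qed.
Lemma l2 (wi gi t : int) : `|wi| <= 1 -> 0 < t -> wi*gi < 0 -> 0 < (gi - t*wi)*gi.
Proof. move=> H; have: wi = -1 \/ wi = 0 \/ wi = 1 by lia. case=> [->|[->|->]]; nia. Qed.
Lemma l3 (z h g : int) : 0 <= z * h -> 0 <= h * g -> (z != 0 -> h != 0) -> 0 <= z * g.
Proof. nia. Qed.
Lemma l4 (wi gi : int) : `|wi| <= 1 -> 0 < wi * gi -> gi - `|gi| * wi = 0.
Proof. move=> H; have: wi = -1 \/ wi = 0 \/ wi = 1 by lia. case=> [->|[->|->]]; nia. Qed.

Lemma ex_min_prop (P : nat -> Prop) m0 : P m0 ->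
  exists m, P m /\ forall m', (m' < m)%N -> ~ P m'.
Proof.
elim/ltn_ind: m0 => m0 IH H.
case: (classic (exists m', (m' < m0)%N /\ P m')) => [[m' [lt Pm']]|Hn].
  exact: IH m' lt Pm'.
by exists m0; split => // m' lt Pm'; apply: Hn; exists m'.
Qed.

Lemma pm1_circuit d n (A : 'M[int]_(d,n)) (u : 'cV[int]_n) j0 :
  A *m u = 0 -> (forall i, `|u i 0| <= 1) -> u j0 0 * u j0 0 = 1 ->
  (forall w, A *m w = 0 -> w != 0 -> sd_supp_sub w u -> sd_supp_sub u w) ->
  sd_circuit A u.
Proof.
move=> Au ub Hu Hmin; split => //.
  by apply/eqP => u0; move: Hu; rewrite u0 mxE mul0r => /eqP; rewrite eq_sym oner_eq0.
move=> y ny par.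
have yE : y = (y j0 0 * u j0 0) *: u.
  apply/matrixP => i j; rewrite (ord1 j) mxE.
  by rewrite -[LHS]mulr1 -Hu mulrA par; ring.
have s0 : y j0 0 * u j0 0 != 0.
  by apply/eqP => s0; move/eqP: ny; apply; rewrite yE s0 scale0r.
rewrite yE /sd_sqnorm; under [X in _ <= X]eq_bigr do rewrite mxE exprMn.
rewrite -mulr_sumr; apply: ler_peMl.
  by apply: sumr_ge0 => i _; apply: sqr_ge0.
by move: s0; nia.
Qed.

Lemma conf_circuit d n (A : 'M[int]_(d,n)) (g : 'cV[int]_n) :
  totally_unimodular A -> A *m g = 0 -> g != 0 ->
  exists z, [/\ sd_circuit A z, (forall i, `|z i 0| <= 1),
     (forall i, 0 <= z i 0 * g i 0) & sd_supp_sub z g].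
Proof.
move=> TU.
pose sc (v : 'cV[int]_n) := #|[set i | v i 0 != 0]|.
suff H : forall m (g : 'cV[int]_n), (sc g < m)%N -> A *m g = 0 -> g != 0 ->
  exists z, [/\ sd_circuit A z, (forall i, `|z i 0| <= 1),
     (forall i, 0 <= z i 0 * g i 0) & sd_supp_sub z g].
  by move=> Ag ng; exact: H _ g (ltnSn _) Ag ng.
clear g; elim => [g|m IH g]; first by rewrite ltn0.
move=> Hm Ag ng.
have [w0 [[Aw0 [nw0 sw0]] Hw0min]] : exists w0,
   (A *m w0 = 0 /\ w0 != 0 /\ sd_supp_sub w0 g) /\
   forall w, A *m w = 0 -> w != 0 -> sd_supp_sub w w0 -> sd_supp_sub w0 w.
  have [k [[w0 [[Aw0 [nw0 sw0]] Ek]] Hk]] := ex_min_prop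
    (P := fun k => exists w0, (A *m w0 = 0 /\ w0 != 0 /\ sd_supp_sub w0 g) /\ sc w0 = k)
    (ex_intro _ g (conj (conj Ag (conj ng (fun i h => h))) erefl)).
  exists w0; split => // w Aw nw sww0.
  apply: NNPP => Hn; apply: (Hk (sc w)).
    rewrite -Ek; apply: proper_card; apply/properP; split.
      by apply/subsetP => i; rewrite !inE; exact: sww0 i.
    apply: NNPP => Hx; apply: Hn => i Hi; apply: NNPP => Hwi; apply: Hx.
    by exists i; rewrite inE //; apply/negP.
  exists w; split => //; split => //; split => // i Hi; apply: sw0; exact: sww0.
have [w [Aw wb sww0 [j0 [wj0 w0E]]]] := tu_circuit TU Aw0 nw0 Hw0min.
have sw0w : sd_supp_sub w0 w.
  by move=> i; rewrite {1}w0E mxE mulf_eq0 negb_or => /andP [_ ->].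
have wmin : forall w', A *m w' = 0 -> w' != 0 -> sd_supp_sub w' w -> sd_supp_sub w w'.
  move=> w' A' n' s' i Hi.
  have := Hw0min w' A' n' (fun i h => sww0 i (s' i h)) i; apply; exact: sww0 i Hi.
have sw : sd_supp_sub w g := fun i h => sw0 i (sww0 i h).
have Hwj0 : w j0 0 * w j0 0 = 1 by rewrite wj0 mulr1.
case: (boolP [forall i, 0 <= w i 0 * g i 0]) => [/forallP Hpos|Npos].
  by exists w; split => //; exact: pm1_circuit Hwj0 wmin.
case: (boolP [forall i, w i 0 * g i 0 <= 0]) => [/forallP Hneg|Nneg].
  exists (- w); split.
  - apply: (pm1_circuit (j0 := j0)). all: try (by rewrite mulmxN Aw oppr0); try (by move=> ii; rewrite mxE normrN); try (by rewrite !mxE mulrNN).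
    move=> w' A' n' s' ii; rewrite mxE oppr_eq0 => H.
    apply: (wmin w' A' n' _ ii H) => k Hk; move: (s' k Hk); by rewrite mxE oppr_eq0.
  all: try (by move=> ii; rewrite mxE normrN); try (by move=> ii; rewrite mxE mulNr oppr_ge0); try (by move=> ii; rewrite mxE oppr_eq0; exact: sw).
  all: try (by move=> ii; rewrite mxE oppr_eq0 => /sw).
move: Nneg; rewrite negb_forall => /existsP [i1 Hi1].
move: Npos; rewrite negb_forall => /existsP [i2 Hi2].
rewrite -ltNge in Hi2; rewrite -ltNge in Hi1.
case: (@arg_minnP _ i1 (fun i => 0 < w i 0 * g i 0) (fun i => absz (g i 0)) Hi1)
  => i0 Pi0 Hmin0.
have g0 : g i0 0 != 0 by apply/eqP => E; move: Pi0; rewrite E mulr0 ltxx.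
set t := `|g i0 0|.
have tpos : 0 < t by rewrite /t normr_gt0.
pose h := g - t *: w.
have hE i : h i 0 = g i 0 - t * w i 0 by rewrite !mxE.
have Hhg : forall i, 0 <= h i 0 * g i 0.
  move=> i; rewrite hE; apply: l1 => //; last exact: sw.
  by move=> Hp; have := Hmin0 i Hp; rewrite /t; lia.
have sh : sd_supp_sub h g.
  move=> i; rewrite hE => Hh; apply/negP => /eqP gi0; move: Hh.
  case: (boolP (w i 0 == 0)) => [/eqP -> | /(sw i)]; last by rewrite gi0 eqxx.
  by rewrite gi0 mulr0 subrr eqxx.
have hi0 : h i0 0 = 0 by rewrite hE; exact: l4.
have nh : h != 0.
  apply/eqP => h0; have := l2 (wb i2) tpos Hi2; rewrite -hE h0 mxE mul0r ltxx //.
have Ah : A *m h = 0 by rewrite mulmxBr -scalemxAr Aw Ag scaler0 subrr.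
have Hsc : (sc h < m)%N.
  rewrite -ltnS; apply: leq_trans Hm; rewrite ltnS; apply: proper_card; apply/properP; split.
    by apply/subsetP => i; rewrite !inE; exact: sh i.
  by exists i0; rewrite inE ?hi0 ?eqxx.
have [z [Cz zb zh szh]] := IH h Hsc Ah nh.
exists z; split => //.
  by move=> i; apply: (l3 (zh i) (Hhg i)); exact: szh i.
by move=> i Hi; apply: sh; apply: szh.
Qed.
Lemma cost_add n (c v w : 'cV[int]_n) : sd_cost c (v + w) = sd_cost c v + sd_cost c w.
Proof. by rewrite /sd_cost -big_split; apply: eq_bigr => i _; rewrite mxE mulrDr. Qed.

Lemma cost_opp n (c v : 'cV[int]_n) : sd_cost c (- v) = - sd_cost c v.
Proof. by rewrite /sd_cost -sumrN; apply: eq_bigr => i _; rewrite mxE mulrN. Qed.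

Lemma cost_sub n (c v w : 'cV[int]_n) : sd_cost c (v - w) = sd_cost c v - sd_cost c w.
Proof. by rewrite cost_add cost_opp. Qed.

Lemma cost_scale n (c v : 'cV[int]_n) a : sd_cost c (a *: v) = a * sd_cost c v.
Proof. by rewrite /sd_cost mulr_sumr; apply: eq_bigr => i _; rewrite mxE mulrCA. Qed.

Lemma cost0 n (c : 'cV[int]_n) : sd_cost c 0 = 0.
Proof. by rewrite /sd_cost big1 // => i _; rewrite mxE mulr0. Qed.

Lemma norm1_ge0 n (v : 'cV[int]_n) : 0 <= sd_norm1 v.
Proof. by apply: sumr_ge0 => i _; apply: normr_ge0. Qed.

Lemma norm1_scale n (v : 'cV[int]_n) a : sd_norm1 (a *: v) = `|a| * sd_norm1 v.
Proof. by rewrite /sd_norm1 mulr_sumr; apply: eq_bigr => i _; rewrite mxE normrM. Qed.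

Lemma norm1_eq0 n (v : 'cV[int]_n) : sd_norm1 v = 0 -> v = 0.
Proof.
move=> H; apply/matrixP => i j; rewrite (ord1 j) mxE.
have := psumr_eq0P (P := predT) (F := fun i => `|v i 0|) (fun i _ => normr_ge0 _) H (i:=i) isT.
by move/eqP; rewrite normr_eq0 => /eqP.
Qed.

Lemma norm1_gt0 n (v : 'cV[int]_n) : v != 0 -> 0 < sd_norm1 v.
Proof.
move=> nv; rewrite lt_def norm1_ge0 andbT; apply/eqP => /norm1_eq0 H.
by rewrite H eqxx in nv.
Qed.

Lemma norm1_tri n (v w : 'cV[int]_n) : sd_norm1 (v + w) <= sd_norm1 v + sd_norm1 w.
Proof. by rewrite /sd_norm1 -big_split; apply: ler_sum => i _; rewrite mxE ler_normD. Qed.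

Lemma strict3 (a y b s : int) : s * s = 1 -> 0 < a * s -> b * s < 0 ->
  `|a + y + b| < `|a| + `|y| + `|b|.
Proof. move=> H; have: s = 1 \/ s = -1 by nia. case=> ->; lia. Qed.

Lemma norm1_strict3 n (v e w : 'cV[int]_n) (i : 'I_n) (s : int) :
  s * s = 1 -> 0 < v i 0 * s -> w i 0 * s < 0 ->
  sd_norm1 (v + e + w) < sd_norm1 v + sd_norm1 e + sd_norm1 w.
Proof.
move=> Hs H1 H2; rewrite /sd_norm1 -!big_split /=.
rewrite (bigD1 i) //= [X in _ < X](bigD1 i) //=.
apply: ltr_leD; first by rewrite !mxE; exact: strict3 Hs H1 H2.
apply: ler_sum => j _; rewrite !mxE.
by apply: le_trans (ler_normD _ _) _; rewrite lerD2r ler_normD.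
Qed.

Lemma sgn_cases (g D : int) : 0 <= g * D -> (0 <= g /\ 0 <= D) \/ (g <= 0 /\ D <= 0).
Proof.
move=> H.
case: (lerP 0 D) => HD; case: (lerP 0 g) => Hg.
- by left.
- have H1 : g * D <= 0 by rewrite mulr_le0_ge0 // ltW.
  have /eqP : g * D = 0 by lia.
  rewrite mulf_eq0 => /orP [/eqP E|/eqP E]; first by lia.
  by right; split; lia.
- have H1 : g * D <= 0 by rewrite mulr_ge0_le0 // ltW.
  have /eqP : g * D = 0 by lia.
  rewrite mulf_eq0 => /orP [/eqP E|/eqP E]; last by lia.
  by right; split; lia.
- by right; split; lia.
Qed.
Arguments sgn_cases {g D}.
Lemma conf_int (g D : int) : 0 <= g * D -> `|g| <= `|D| -> 0 <= (D - g) * D /\ `|D - g| <= `|D|.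
Proof. move=> H; case: (sgn_cases H) => [[]|[]] ? ? ?; split; nia. Qed.
Lemma conf_int2 (g D : int) : 0 <= g * D -> `|g| <= `|D| -> `|D - g| = `|D| - `|g|.
Proof. move=> H; case: (sgn_cases H) => [[]|[]] ? ? ?; nia. Qed.
Lemma conf_int3 (x D v u : int) : 0 <= x <= u -> 0 <= x + D <= u -> 0 <= v * D -> `|v| <= `|D| -> 0 <= x + v <= u.
Proof. move=> ? ? H; case: (sgn_cases H) => [[]|[]] ? ? ?; nia. Qed.
Lemma conf_int4 (a b c : int) : 0 <= a * b -> `|a| <= `|b| -> 0 <= b * c -> `|b| <= `|c| -> 0 <= a * c.
Proof. move=> H1 ? H2 ?; case: (sgn_cases H1) => [[]|[]] ? ?; case: (sgn_cases H2) => [[]|[]] ? ?; nia. Qed.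
Lemma conf_int5 (a b : int) : 0 <= a * b -> `|a| = `|b| -> a = b.
Proof. move=> H1 ?; case: (sgn_cases H1) => [[]|[]] ? ?; nia. Qed.

Lemma conf_trans n (v w y : 'cV[int]_n) : sd_conf v w -> sd_conf w y -> sd_conf v y.
Proof.
move=> H1 H2 i; have [a b] := H1 i; have [c e] := H2 i; split; last exact: le_trans e.
exact: conf_int4 a b c e.
Qed.

Lemma conf_sub n (g D : 'cV[int]_n) : sd_conf g D -> sd_conf (D - g) D.
Proof. move=> H i; have [a b] := H i; rewrite !mxE; exact: conf_int a b. Qed.

Lemma norm1_conf_sub n (g D : 'cV[int]_n) : sd_conf g D ->
  sd_norm1 (D - g) = sd_norm1 D - sd_norm1 g.
Proof.
move=> H; rewrite /sd_norm1 -sumrB; apply: eq_bigr => i _; rewrite !mxE.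
have [a b] := H i; exact: conf_int2 a b.
Qed.

Lemma feas_conf d n (A : 'M[int]_(d,n)) b u (x D v : 'cV[int]_n) :
  sd_feasible A b u x -> sd_feasible A b u (x + D) -> A *m v = 0 -> sd_conf v D ->
  sd_feasible A b u (x + v).
Proof.
move=> [Ax Hx] [_ HxD] Av Hc; split; first by rewrite mulmxDr Ax Av addr0.
move=> i; have := Hx i; have := HxD i; have [a e] := Hc i; rewrite !mxE => H1 H2.
exact: conf_int3 H2 H1 a e.
Qed.

Lemma graver_below d n (A : 'M[int]_(d,n)) (w : 'cV[int]_n) :
  A *m w = 0 -> w != 0 -> exists g, sd_graver A g /\ sd_conf g w.
Proof.
move=> Aw nw.
have [k [[v [[Av [nv cv]] Ek]] Hk]] := ex_min_prop
  (P := fun k => exists v, (A *m v = 0 /\ v != 0 /\ sd_conf v w) /\ absz (sd_norm1 v) = k)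
  (ex_intro _ w (conj (conj Aw (conj nw (fun i => conj (sqr_ge0 _) (lexx _)))) erefl)).
exists v; split => //; split => // w' Aw' nw' cw'.
have Hge : sd_norm1 v <= sd_norm1 w'.
  rewrite leNgt; apply/negP => Hlt; apply: (Hk (absz (sd_norm1 w'))).
    by rewrite -Ek; move: Hlt (norm1_ge0 w'); lia.
  by exists w'; split => //; split => //; split => //; exact: conf_trans cw' cv.
have Heq : forall i, `|w' i 0| = `|v i 0|.
  have H0 : \sum_i (`|v i 0| - `|w' i 0|) = 0.
    apply/eqP; rewrite eq_le; apply/andP; split.
      by rewrite sumrB subr_le0.
    by apply: sumr_ge0 => i _; rewrite subr_ge0; case: (cw' i).
  move=> i; have := psumr_eq0P (P := predT) (F := fun i => `|v i 0| - `|w' i 0|) _ H0 (i:=i) isT.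
  move=> /(_ _)/eqP; rewrite subr_eq0 => H1; apply/esym/eqP; apply: H1.
  by move=> j _; rewrite subr_ge0; case: (cw' j).
apply/matrixP => i j; rewrite (ord1 j); have := Heq i; have [a _] := cw' i.
exact: conf_int5 a.
Qed.

Lemma lemM d n (A : 'M[int]_(d,n)) b c u x (dl : rat) :
  sd_feasible A b u x ->
  (forall g, sd_graver A g -> sd_feasible A b u (x + g) -> sd_ratio c g <= dl) ->
  forall D, A *m D = 0 -> sd_feasible A b u (x + D) ->
  (- sd_cost c D)%:~R <= dl * (sd_norm1 D)%:~R.
Proof.
move=> Fx Hmax.
suff H : forall k D, (absz (sd_norm1 D) < k)%N -> A *m D = 0 ->
    sd_feasible A b u (x + D) -> (- sd_cost c D)%:~R <= dl * (sd_norm1 D)%:~R.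
  by move=> D; apply: H (ltnSn _).
elim => [D|k IH D]; first by rewrite ltn0.
move=> Hk AD FD.
case: (eqVneq D 0) => [->|nD].
  have -> : sd_norm1 (0 : 'cV[int]_n) = 0.
    by rewrite /sd_norm1 big1 // => i _; rewrite mxE normr0.
  by rewrite cost0 oppr0 mulr0z mulr0.
have [g [Gg cg]] := graver_below AD nD.
have [Ag ng _] := Gg.
have Fg : sd_feasible A b u (x + g) := feas_conf Fx FD Ag cg.
set D' := D - g.
have AD' : A *m D' = 0 by rewrite mulmxBr AD Ag subrr.
have cD' := conf_sub cg.
have FD' : sd_feasible A b u (x + D') := feas_conf Fx FD AD' cD'.
have nD' : sd_norm1 D' = sd_norm1 D - sd_norm1 g := norm1_conf_sub cg.
have gpos := norm1_gt0 ng.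
have IH' := IH D'.
have Hk' : (absz (sd_norm1 D') < k)%N.
  move: Hk gpos nD' (norm1_ge0 D'); lia.
have {IH IH'} IH := IH' Hk' AD' FD'.
have Hg : (- sd_cost c g)%:~R <= dl * (sd_norm1 g)%:~R.
  by have := Hmax g Gg Fg; rewrite /sd_ratio ler_pdivrMr // ltr0z.
have E1 : - sd_cost c D = - sd_cost c g + - sd_cost c D' by rewrite /D' cost_sub; ring.
have E2 : sd_norm1 D = sd_norm1 g + sd_norm1 D' by rewrite nD'; ring.
by rewrite E1 E2 !intrD mulrDr; exact: lerD Hg IH.
Qed.

Lemma stopped_opt d n (A : 'M[int]_(d,n)) b c u x :
  sd_feasible A b u x -> sd_stopped A b c u x -> sd_optimal A b c u x.
Proof.
move=> Fx St; split => // y Fy.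
have Hm : forall g, sd_graver A g -> sd_feasible A b u (x + g) -> sd_ratio c g <= 0.
  move=> g Gg Fg; rewrite leNgt; apply/negP => Hp; apply: St; exists g; split => //.
have AD : A *m (y - x) = 0 by case: Fx => Ax _; case: Fy => Ay _; rewrite mulmxBr Ax Ay subrr.
have FD : sd_feasible A b u (x + (y - x)) by rewrite addrC subrK.
have := @lemM d n A b c u x 0 Fx Hm (y - x) AD FD.
rewrite mul0r lerz0 cost_sub.
move=> H1; move: H1; lia.
Qed.

Definition step_data d n (A : 'M[int]_(d,n)) b c u (x : nat -> 'cV[int]_n) k
  (g : 'cV[int]_n) (al : int) (i : 'I_n) : Prop :=
  [/\ sd_graver A g, sd_circuit A g, (forall j, `|g j 0| <= 1),
     (forall g', sd_graver A g' -> sd_feasible A b u (x k + g') -> sd_ratio c g' <= sd_ratio c g) &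
     [/\ 0 < sd_ratio c g, x k.+1 = x k + al *: g,
      1 <= al, sd_feasible A b u (x k.+1) & ~ (0 <= x k.+1 i 0 + g i 0 <= u i 0)]].

Lemma step_props d n (A : 'M[int]_(d,n)) b c u (x : nat -> 'cV[int]_n) k :
  totally_unimodular A -> sd_step A b c u (x k) (x k.+1) ->
  exists g al i, step_data A b c u x k g al i.
Proof.
move=> TU [z [Gz Fz Hmax Hpos [al [Fal Hal Ey]]]].
have [Az nz Gmin] := Gz.
have [z' [Cz' zb zs zsupp]] := conf_circuit TU Az nz.
have [Az' nz' _ _] := Cz'.
have E : z' = z.
  apply: Gmin => // j; split; first exact: zs.
  case: (eqVneq (z' j 0) 0) => [->|Hj]; first by rewrite normr0 normr_ge0.
  have := zsupp j Hj; have := zb j; lia.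
subst z'.
have al1 : 1 <= al by apply: Hal; rewrite scale1r.
have Hnf : ~ sd_feasible A b u (x k + (al + 1) *: z).
  by move=> /Hal; lia.
have [i Hi] : exists i, ~ (0 <= x k.+1 i 0 + z i 0 <= u i 0).
  apply: NNPP => H; apply: Hnf; split.
    by case: Fz => Ax _; rewrite mulmxDr -scalemxAr Az scaler0 addr0; case: Fal => Ax' _; move: Ax'; rewrite mulmxDr -scalemxAr Az scaler0 addr0.
  move=> j; apply: NNPP => Hj; apply: H; exists j.
  rewrite Ey !mxE; move: Hj; rewrite !mxE -addrA mulrDl mul1r //.
exists z, al, i; split => //.
by split => //; rewrite Ey.
Qed.

Lemma tri_path n (x : nat -> 'cV[int]_n) k l : (k <= l)%N ->
  sd_norm1 (x l - x k) <= \sum_(k <= m < l) sd_norm1 (x m.+1 - x m).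
Proof.
elim: l => [|l IH].
  rewrite leqn0 => /eqP ->; rewrite big_geq // subrr.
  by rewrite /sd_norm1 big1 // => i _; rewrite mxE normr0.
rewrite leq_eqVlt => /orP [/eqP ->|Hk].
  rewrite big_geq // subrr.
  by rewrite /sd_norm1 big1 // => i _; rewrite mxE normr0.
rewrite big_nat_recr //=.
have -> : x l.+1 - x k = (x l - x k) + (x l.+1 - x l).
  by apply/matrixP => p q; rewrite !mxE; ring.
apply: le_trans (norm1_tri _ _) _; rewrite lerD2r; exact: IH.
Qed.

Lemma arith_bound (xk1 s u xk' : int) : s * s = 1 -> 0 <= xk1 <= u ->
  ~ (0 <= xk1 + s <= u) -> 0 <= xk' <= u -> (xk' - xk1) * s <= 0.
Proof. move=> H; have: s = 1 \/ s = -1 by nia. case=> ->; lia. Qed.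

Unset Implicit Arguments. Set Strict Implicit. Set Printing Implicit Defensive.

Theorem corollary3 (d n : nat) (A : 'M[int]_(d, n)) (b : 'cV[int]_d)
  (c u : 'cV[int]_n) (vals : seq rat) (x : nat -> 'cV[int]_n) (K : nat) :
  totally_unimodular A ->
  (forall i, 0 <= u i 0) ->
  uniq vals ->
  (forall q : rat, q \in vals <-> (0 < q /\ exists z, sd_circuit A z /\ sd_ratio c z = q)) ->
  sd_feasible A b u (x 0%N) ->
  (forall k, (k < K)%N -> sd_step A b c u (x k) (x k.+1)) ->
  (K <= n * size vals)%N /\ (sd_stopped A b c u (x K) -> sd_optimal A b c u (x K)).
Proof.
move=> TU u0 Uv HV Fx0 Hst.
have FX : forall k, (k <= K)%N -> sd_feasible A b u (x k).
  elim => // k IH Hk.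
  by have [z [_ _ _ _ [al [Fal _ ->]]]] := Hst k Hk.
split; last by move=> St; apply: stopped_opt => //; exact: FX.
have SD : forall k, (k < K)%N -> exists g al i, step_data A b c u x k g al i.
  by move=> k Hk; apply: step_props TU (Hst k Hk).
have Hopt : forall k, exists p : option ('cV[int]_n * int * 'I_n), (k < K)%N ->
   match p with Some (g, al, i) => step_data A b c u x k g al i | None => False end.
  move=> k; case: (ltnP k K) => Hk.
    by have [g [al [i H]]] := SD k Hk; exists (Some (g, al, i)).
  by exists None.
pose dat k := proj1_sig (constructive_indefinite_description _ (Hopt k)).
have datP : forall k, (k < K)%N -> exists g al i,
    dat k = Some (g, al, i) /\ step_data A b c u x k g al i.
  move=> k Hk; have := proj2_sig (constructive_indefinite_description _ (Hopt k)) Hk.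
  rewrite -/(dat k); case: (dat k) => [[[g al] i]|] //= H.
  by exists g, al, i.
pose del k : rat := if dat k is Some (g, _, _) then sd_ratio c g else 0.
pose key k : rat * nat :=
  if dat k is Some (g, _, i) then (sd_ratio c g, nat_of_ord i) else (0, 0%N).
pose N m : rat := (sd_norm1 (x m.+1 - x m))%:~R.
have Kmax : forall k, (k < K)%N -> forall g', sd_graver A g' ->
    sd_feasible A b u (x k + g') -> sd_ratio c g' <= del k.
  by move=> k Hk; have [g [al [i [E [_ _ _ H _]]]]] := datP k Hk; rewrite /del E.
have Kpos : forall k, (k < K)%N -> 0 < del k.
  by move=> k Hk; have [g [al [i [E [_ _ _ _ [H _ _ _ _]]]]]] := datP k Hk; rewrite /del E.
have Kstep : forall k, (k < K)%N -> exists g al, [/\ del k = sd_ratio c g,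
    x k.+1 - x k = al *: g, g != 0 & 1 <= al].
  move=> k Hk; have [g [al [i [E [[_ ng _] _ _ _ [_ Ex al1 _ _]]]]]] := datP k Hk.
  exists g, al; split => //; first by rewrite /del E.
  by rewrite Ex addrC addKr.
have KC : forall k, (k < K)%N -> (- sd_cost c (x k.+1 - x k))%:~R = del k * N k.
  move=> k Hk; have [g [al [Ed Ex ng al1]]] := Kstep k Hk.
  rewrite /N Ed Ex cost_scale norm1_scale /sd_ratio.
  have gp := norm1_gt0 ng.
  have -> : `|al| = al by apply/normr_idP; lia.
  rewrite -mulrN !intrM; field.
  by rewrite intr_eq0 lt0r_neq0.
have KN : forall k, (k < K)%N -> 0 < N k.
  move=> k Hk; have [g [al [Ed Ex ng al1]]] := Kstep k Hk.
  rewrite /N Ex norm1_scale ltr0z; apply: mulr_gt0; last exact: norm1_gt0.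
  by rewrite normr_gt0; apply/eqP => E; move: al1; rewrite E.
have Ksum : forall k l, (k <= l)%N -> (l < K)%N ->
    \sum_(k <= m < l.+1) del m * N m <= del k * (sd_norm1 (x l.+1 - x k))%:~R.
  move=> k l Hkl HlK.
  have Hk : (k < K)%N by apply: leq_ltn_trans Hkl HlK.
  have AD : A *m (x l.+1 - x k) = 0.
    case: (FX l.+1 HlK) => A1 _; case: (FX k (ltnW Hk)) => A2 _.
    by rewrite mulmxBr A1 A2 subrr.
  have FD : sd_feasible A b u (x k + (x l.+1 - x k)) by rewrite addrC subrK; exact: FX.
  have := lemM (FX k (ltnW Hk)) (Kmax k Hk) AD FD.
  apply: le_trans; rewrite le_eqVlt; apply/orP; left; apply/eqP.
  rewrite -(@eq_big_nat _ _ _ k l.+1 (fun m => (- sd_cost c (x m.+1 - x m))%:~R)); last first.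
    move=> m /andP [_ Hm]; apply: KC; exact: leq_trans Hm HlK.
  rewrite -rmorph_sum sumrN; congr ((- _)%:~R).
  under eq_big_nat => m _ do rewrite cost_sub.
  by rewrite (telescope_sumr (fun m => sd_cost c (x m))) ?cost_sub // ltnW // ltnS.
have Kmono1 : forall k, (k.+1 < K)%N -> del k.+1 <= del k.
  move=> k Hk1; have Hk : (k < K)%N := ltnW Hk1.
  have := Ksum k k.+1 (leqnSn k) Hk1.
  rewrite big_nat_recr // big_nat1 => H.
  have T := tri_path x (leq_trans (leqnSn k) (leqnSn k.+1)).
  rewrite big_nat_recr // big_nat1 in T.
  have H2 : del k * (sd_norm1 (x k.+2 - x k))%:~R <= del k * (N k + N k.+1).
    by apply: ler_wpM2l; [exact: ltW (Kpos k Hk) | rewrite /N -intrD ler_int].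
  have H3 := le_trans H H2; rewrite mulrDr lerD2l in H3.
  by rewrite ler_pM2r in H3; [exact: H3 | exact: KN].
have Kmono : forall k l, (k <= l)%N -> (l < K)%N -> del l <= del k.
  move=> k; elim => [|l IH] Hkl HlK.
    by rewrite leqn0 in Hkl; rewrite (eqP Hkl).
  rewrite leq_eqVlt in Hkl; case/orP: Hkl => [/eqP ->//| Hkl].
  exact: le_trans (Kmono1 l HlK) (IH Hkl (ltnW HlK)).
have Kinj : forall k k', (k < k')%N -> (k' < K)%N -> key k = key k' -> False.
  move=> k k' Hkk' Hk'K.
  have Hk : (k < K)%N := ltn_trans Hkk' Hk'K.
  have [g [al [i [E [Gg Cg gb _ [gpos Ex al1 Fk1 Ni]]]]]] := datP k Hk.
  have [g' [al' [i' [E' [Gg' Cg' gb' _ [gpos' Ex' al1' Fk1' Ni']]]]]] := datP k' Hk'K.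
  rewrite /key E E'; case=> Er Ei.
  have ii : i' = i by apply: val_inj.
  subst i'.
  have Dm : forall m, (k <= m)%N -> (m <= k')%N -> del m = del k.
    move=> m H1 H2; apply/eqP; rewrite eq_le Kmono //; last exact: leq_ltn_trans H2 Hk'K.
    have -> : del k = del k' by rewrite /del E E' Er.
    exact: Kmono.
  have [Ax1 Bx1] := Fk1.
  have s0 : g i 0 != 0.
    by apply/eqP => s0; apply: Ni; rewrite s0 addr0; exact: Bx1 i.
  have ss : g i 0 * g i 0 = 1 by apply: sq1_of s0 (gb i).
  have [_ Bxk'] := Fk1'.
  have g'0 : g' i 0 != 0.
    by apply/eqP => e; apply: Ni'; rewrite e addr0; exact: Bxk' i.
  have bnd : (x k'.+1 i 0 - x k.+1 i 0) * g i 0 <= 0 := arith_bound ss (Bx1 i) Ni (Bxk' i).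
  have dk'pos : (x k'.+1 i 0 - x k' i 0) * g i 0 != 0.
    rewrite Ex' !mxE addrAC subrr add0r !mulf_neq0 //.
    by apply/eqP => e; move: al1'; rewrite e.
  have [l [Hl1 Hl2 Hl3]] : exists l, [/\ (k < l)%N, (l <= k')%N &
      (x l.+1 i 0 - x l i 0) * g i 0 < 0].
    apply: NNPP => Hn.
    have Hge : forall m, (k < m)%N -> (m <= k')%N -> 0 <= (x m.+1 i 0 - x m i 0) * g i 0.
      move=> m H1 H2; rewrite leNgt; apply/negP => H3; apply: Hn; by exists m.
    have tel : \sum_(k.+1 <= m < k'.+1) (x m.+1 i 0 - x m i 0) * g i 0 =
               (x k'.+1 i 0 - x k.+1 i 0) * g i 0.
      by rewrite -mulr_suml (telescope_sumr (fun m => x m i 0)) //; exact: ltnW.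
    have : (x k'.+1 i 0 - x k' i 0) * g i 0 <=
           \sum_(k.+1 <= m < k'.+1) (x m.+1 i 0 - x m i 0) * g i 0.
      rewrite big_nat_recr //= lerDr.
      rewrite big_nat_cond; apply: sumr_ge0 => m /andP [/andP [H1 H2] _].
      by apply: Hge => //; exact: ltnW.
    rewrite tel => H; have H0 := Hge k' Hkk' (leqnn k').
    move: H0 H bnd dk'pos.
    move: ((x k'.+1 i 0 - x k' i 0) * g i 0) ((x k'.+1 i 0 - x k.+1 i 0) * g i 0) => p q.
    lia.
  have HlK : (l < K)%N := leq_ltn_trans Hl2 Hk'K.
  have Hsum := Ksum k l (ltnW Hl1) HlK.
  rewrite (@eq_big_nat _ _ _ k l.+1 _ (fun m => del k * N m)) in Hsum; last first.
    by move=> m /andP [H1 H2]; rewrite Dm // (leq_trans _ Hl2).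
  rewrite -mulr_sumr in Hsum.
  have Strict : (sd_norm1 (x l.+1 - x k))%:~R < \sum_(k <= m < l.+1) N m.
    have Evec : x l.+1 - x k = (x k.+1 - x k) + (x l - x k.+1) + (x l.+1 - x l).
      by apply/matrixP => p q; rewrite !mxE; ring.
    have S1 := @norm1_strict3 n (x k.+1 - x k) (x l - x k.+1) (x l.+1 - x l) i (g i 0) ss.
    have T := tri_path x Hl1.
    have P1 : 0 < (x k.+1 - x k) i 0 * g i 0.
      rewrite Ex !mxE addrAC subrr add0r -mulrA ss mulr1; lia.
    have P2 : (x l.+1 - x l) i 0 * g i 0 < 0 by rewrite !mxE.
    have {S1} S1 := S1 P1 P2; rewrite -Evec in S1.
    rewrite big_ltn; last exact: ltnW Hl1.
    rewrite big_nat_recr //= /N -rmorph_sum -!intrD ltr_int.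
    move: S1 T; move: (sd_norm1 (x l.+1 - x k)) (sd_norm1 (x k.+1 - x k))
      (sd_norm1 (x l - x k.+1)) (sd_norm1 (x l.+1 - x l))
      (\sum_(k.+1 <= i0 < l) sd_norm1 (x i0.+1 - x i0)) => p1 p2 p3 p4 p5.
    lia.
  have := Kpos k Hk => dpos.
  have S2 : del k * (sd_norm1 (x l.+1 - x k))%:~R < del k * \sum_(k <= m < l.+1) N m.
    by rewrite ltr_pM2l.
  by have := le_lt_trans Hsum S2; rewrite ltxx.
have Kkey : forall k, (k < K)%N -> key k \in [seq (q, j) | q <- vals, j <- iota 0 n].
  move=> k Hk; have [g [al [i [E [Gg Cg _ _ [gpos _ _ _ _]]]]]] := datP k Hk.
  rewrite /key E; apply: allpairs_f.
    by apply/HV; split => //; exists g; split.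
  by rewrite mem_iota add0n leq0n ltn_ord.
have Uniq : uniq (map key (iota 0 K)).
  rewrite map_inj_in_uniq ?iota_uniq // => k k'; rewrite !mem_iota !add0n /= => Hk Hk' Ekk.
  case: (ltngtP k k') => // H; exfalso.
    exact: Kinj H Hk' Ekk.
  exact: Kinj H Hk (esym Ekk).
have := uniq_leq_size Uniq.
have Hsub : {subset map key (iota 0 K) <= [seq (q, j) | q <- vals, j <- iota 0 n]}.
  by move=> q /mapP [k Hk ->]; apply: Kkey; move: Hk; rewrite mem_iota add0n.
move/(_ _ Hsub).
by rewrite size_map size_iota size_allpairs size_iota mulnC.
Qed.
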